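(* Let $A$ be an associative $k$-algebra. Then $\mathfrak{B}(A)$ is an associative algebra, and the maps $(x,a)\mapsto x*a$, $(a,x)\mapsto a*x$ ($x\in\mathfrak{B}(A)$, $a\in A$) form an action of $\mathfrak{B}(A)$ on $A$ in the category of associative algebras if and only if $A$ satisfies Condition 2. If this is the case, $\mathfrak{B}(A)=\mathrm{Actor}(A)$.
   Context: $k$ is a commutative ring with unit; associative algebras are not assumed unital. An action of an associative algebra $B$ on an associative algebra $A$ is a pair of bilinear maps $B\times A\to A$, $(b,a)\mapsto b*a$, and $A\times B\to A$, $(a,b)\mapsto a*b$, such that for all $a,a_1,a_2\in A$, $b,b_1,b_2\in B$: $(b_1*b_2)*a=b_1*(b_2*a)$; $a*(b_1*b_2)=(a*b_1)*b_2$; $(b_1*a)*b_2=b_1*(a*b_2)$; $b*(a_1*a_2)=(b*a_1)*a_2$; $(a_1*a_2)*b=a_1*(a_2*b)$; $a_1*(b*a_2)=(a_1*b)*a_2$. A crossed module of associative algebras is an algebra homomorphism $\partial:A\to G$ with an action of $G$ on $A$ such that $\partial(g*a)=g*\partial a$, $\partial(a*g)=\partial a*g$, $\partial a*a'=a*a'$, $a'*\partial a=a'*a$. An actor of $A$ is a crossed module $\partial:A\to\mathrm{Actor}(A)$ such that for every associative algebra $C$ with an action on $A$ there is a unique homomorphism $\varphi:C\to\mathrm{Actor}(A)$ with $\varphi(c)*a=c*a$ and $a*\varphi(c)=a*c$ for all $c\in C$, $a\in A$. Condition 2: for any two associative algebras $B,C$ acting on $A$, $c*(a*b)=(c*a)*b$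 for all $a\in A$, $b\in B$, $c\in C$. Construction of $\mathfrak{B}(A)$: let $(B_j)_{j\in J}$ range over all associative algebras equipped with an action on $A$ (one index per action). For $b\in B_j$ let $\mathbf b$ be the pair of $k$-linear maps $A\to A$, $a\mapsto\mathbf b*a:=b*a$ and $a\mapsto a*\mathbf b:=a*b$. On such pairs $x$ define addition and scalar multiplication componentwise, and the product by $(x*y)*a=x*(y*a)$ and $a*(x*y)=(a*x)*y$. $\mathfrak{B}(A)$ is the set of pairs obtained from all the $\mathbf b$ by iterating these operations; $A\to\mathfrak{B}(A)$ sends $a$ to the pair $(a*-,-*a)$. *)

(* Defs.v *)
From HB Require Import structures.
From mathcomp Require Import all_boot all_algebra.
From mathcomp Require Import boolp functions.
Set Implicit Arguments.
Unset Strict Implicit.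
Unset Printing Implicit Defensive.
Import GRing.Theory.
Local Open Scope ring_scope.

Record nalg (k : comPzRingType) := NAlg {
  nalg_sort :> lmodType k;
  nmul : nalg_sort -> nalg_sort -> nalg_sort;
  nmul_linl : forall y, linear (fun x => nmul x y);
  nmul_linr : forall x, linear (nmul x);
  nmulA : associative nmul }.
Arguments nmul {k} n _ _.

Section Defs.
Variable k : comPzRingType.

Definition nalg_hom (B C : nalg k) (f : B -> C) : Prop :=
  linear f /\ forall x y, f (nmul B x y) = nmul C (f x) (f y).

Record is_action (B A : nalg k) (l : B -> A -> A) (r : A -> B -> A) : Prop := {
  act_l_linA : forall b, linear (l b);
  act_l_linB : forall a, linear (fun b => l b a);
  act_r_linA : forall b, linear (fun a => r a b);
  act_r_linB : forall a, linear (r a);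
  act_ax1 : forall b1 b2 a, l (nmul B b1 b2) a = l b1 (l b2 a);
  act_ax2 : forall a b1 b2, r a (nmul B b1 b2) = r (r a b1) b2;
  act_ax3 : forall b1 a b2, r (l b1 a) b2 = l b1 (r a b2);
  act_ax4 : forall b a1 a2, l b (nmul A a1 a2) = nmul A (l b a1) a2;
  act_ax5 : forall a1 a2 b, r (nmul A a1 a2) b = nmul A a1 (r a2 b);
  act_ax6 : forall a1 b a2, nmul A a1 (l b a2) = nmul A (r a1 b) a2 }.

Record is_crossed_module (A G : nalg k) (d : A -> G)
    (l : G -> A -> A) (r : A -> G -> A) : Prop := {
  cm_hom : nalg_hom d;
  cm_action : is_action l r;
  cm_ax1 : forall g a, d (l g a) = nmul G g (d a);
  cm_ax2 : forall a g, d (r a g) = nmul G (d a) g;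
  cm_ax3 : forall a a', l (d a) a' = nmul A a a';
  cm_ax4 : forall a a', r a' (d a) = nmul A a' a }.

Definition is_actor (A G : nalg k) (d : A -> G)
    (l : G -> A -> A) (r : A -> G -> A) : Prop :=
  is_crossed_module d l r /\
  forall (C : nalg k) (lc : C -> A -> A) (rc : A -> C -> A),
    is_action lc rc ->
    exists! phi : C -> G,
      [/\ nalg_hom phi, (forall c a, l (phi c) a = lc c a) &
          (forall c a, r a (phi c) = rc a c)].

Definition Condition2 (A : nalg k) : Prop :=
  forall (B C : nalg k) (lB : B -> A -> A) (rB : A -> B -> A)
         (lC : C -> A -> A) (rC : A -> C -> A),
    is_action lB rB -> is_action lC rC ->
    forall (a : A) (b : B) (c : C), lC c (rB a b) = rB (lC c a) b.

(* Elements are pairs x = (x.1, x.2) of maps A -> A, with x.1 a = x * a *)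
(* and x.2 a = a * x.                                                  *)
Section BA.
Variable A : nalg k.

Definition pairs := ((A -> A) * (A -> A))%type.

(* product: (x*y)*a = x*(y*a),  a*(x*y) = (a*x)*y *)
Definition pmul (x y : pairs) : pairs := (x.1 \o y.1, y.2 \o x.2).

Inductive inB : pairs -> Prop :=
| inB_gen (B : nalg k) (l : B -> A -> A) (r : A -> B -> A) (b : B) :
    is_action l r -> inB (l b, fun a => r a b)
| inB_add x y : inB x -> inB y -> inB (x + y)
| inB_scale (c : k) x : inB x -> inB (c *: x)
| inB_mul x y : inB x -> inB y -> inB (pmul x y).

Definition inBb : {pred pairs} := fun x => `[< inB x >].

Lemma self_action : is_action (nmul A) (nmul A).
Proof.
split=> *; rewrite ?nmulA //; [exact: nmul_linr | exact: nmul_linl |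
  exact: nmul_linl | exact: nmul_linr].
Qed.

Lemma inBb_submod : submod_closed inBb.
Proof.
split.
- apply/asboolP.
  have -> : (0 : pairs) = 0 *: (nmul A 0, fun a => nmul A a 0) by rewrite scale0r.
  exact/inB_scale/inB_gen/self_action.
- move=> c x y /asboolP Hx /asboolP Hy; apply/asboolP.
  exact/inB_add/Hy/inB_scale.
Qed.

HB.instance Definition _ := GRing.isSubmodClosed.Build k pairs inBb inBb_submod.

Record Bcar := BCar { bval : pairs; bvalP : bval \in inBb }.
HB.instance Definition _ := [isSub for bval].
HB.instance Definition _ := gen_eqMixin Bcar.
HB.instance Definition _ := gen_choiceMixin Bcar.
HB.instance Definition _ := [SubChoice_isSubLmodule of Bcar by <:].

Lemma bval_inB (x : Bcar) : inB (bval x).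
Proof. exact/asboolP/bvalP. Qed.

Lemma inB_lin x : inB x -> linear x.1 /\ linear x.2.
Proof.
elim=> {x} [B l r b H | x y _ [Hx1 Hx2] _ [Hy1 Hy2] | c x _ [Hx1 Hx2]
           | x y _ [Hx1 Hx2] _ [Hy1 Hy2]] /=.
  by split=> [|c u v]; [exact: (act_l_linA H) | exact: (act_r_linA H b)].
  split=> c u v /=; rewrite !addrfctE ?Hx1 ?Hy1 ?Hx2 ?Hy2 scalerDr !addrA;
    congr (_ + _); rewrite -!addrA; congr (_ + _); exact: addrC.
  by split=> c' u v /=; rewrite !scalrfctE ?Hx1 ?Hx2 scalerDr !scalerA mulrC.
by split=> c u v /=; rewrite ?Hy1 ?Hx1 ?Hx2 ?Hy2.
Qed.

Definition Bmul (x y : Bcar) : Bcar :=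
  BCar (introT (asboolP _) (inB_mul (bval_inB x) (bval_inB y))).

Lemma bval_inj : injective bval.
Proof. exact: val_inj. Qed.

Lemma Bmul_linl y : linear (fun x => Bmul x y).
Proof.
move=> c u v; apply: bval_inj => /=.
have [_ L] := inB_lin (bval_inB y).
case: (bval u) (bval v) (bval y) L => [u1 u2] [v1 v2] [y1 y2] /= L.
by rewrite /pmul /=; congr pair; apply/funext => a /=; rewrite ?L.
Qed.

Lemma Bmul_linr x : linear (Bmul x).
Proof.
move=> c u v; apply: bval_inj => /=.
have [L _] := inB_lin (bval_inB x).
case: (bval u) (bval v) (bval x) L => [u1 u2] [v1 v2] [x1 x2] /= L.
by rewrite /pmul /=; congr pair; apply/funext => a /=; rewrite ?L.
Qed.

Lemma BmulA : associative Bmul.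
Proof. by move=> x y z; apply: bval_inj. Qed.

Definition BA : nalg k := NAlg Bmul_linl Bmul_linr BmulA.

Definition BA_l (x : BA) (a : A) : A := (bval x).1 a.
Definition BA_r (a : A) (x : BA) : A := (bval x).2 a.

Definition BA_d (a : A) : BA :=
  BCar (introT (asboolP _) (inB_gen a self_action)).

End BA.
End Defs.

(* Main.v *)
Require Import Defs.
From HB Require Import structures.
From mathcomp Require Import all_boot all_algebra.
From mathcomp Require Import boolp functions.
Set Implicit Arguments. Unset Strict Implicit.
Import GRing.Theory.
Local Open Scope ring_scope.

Section Aux.
Variable k : comPzRingType.

Lemma linD' (U V : lmodType k) (f : U -> V) : linear f ->
  forall u v, f (u + v) = f u + f v.
Proof. by move=> H u v; have := H 1 u v; rewrite !scale1r. Qed.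

Lemma lin0' (U V : lmodType k) (f : U -> V) : linear f -> f 0 = 0.
Proof.
move=> H; have := linD' H 0 0; rewrite addr0 => /(congr1 (fun z => z - f 0)).
by rewrite subrr addrK.
Qed.

Lemma linZ' (U V : lmodType k) (f : U -> V) : linear f ->
  forall c u, f (c *: u) = c *: f u.
Proof. by move=> H c u; have := H c u 0; rewrite (lin0' H) !addr0. Qed.

Variable A : nalg k.

Lemma inB_ax4 x : inB x -> forall a1 a2, x.1 (nmul A a1 a2) = nmul A (x.1 a1) a2.
Proof.
elim=> {x} [B l r b H | x y _ Hx _ Hy | c x _ Hx | x y _ Hx _ Hy] a1 a2 /=.
- exact: act_ax4 H _ _ _.
- by rewrite !addrfctE Hx Hy (linD' (@nmul_linl _ A a2)).
- by rewrite !scalrfctE Hx (linZ' (@nmul_linl _ A a2)).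
- by rewrite Hy Hx.
Qed.

Lemma inB_ax5 x : inB x -> forall a1 a2, x.2 (nmul A a1 a2) = nmul A a1 (x.2 a2).
Proof.
elim=> {x} [B l r b H | x y _ Hx _ Hy | c x _ Hx | x y _ Hx _ Hy] a1 a2 /=.
- exact: act_ax5 H _ _ _.
- by rewrite !addrfctE Hx Hy (linD' (@nmul_linr _ A a1)).
- by rewrite !scalrfctE Hx (linZ' (@nmul_linr _ A a1)).
- by rewrite Hx Hy.
Qed.

Lemma inB_ax6 x : inB x -> forall a1 a2, nmul A a1 (x.1 a2) = nmul A (x.2 a1) a2.
Proof.
elim=> {x} [B l r b H | x y _ Hx _ Hy | c x _ Hx | x y _ Hx _ Hy] a1 a2 /=.
- exact: act_ax6 H _ _ _.
- by rewrite !addrfctE (linD' (@nmul_linr _ A a1)) (linD' (@nmul_linl _ A a2)) Hx Hy.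
- by rewrite !scalrfctE (linZ' (@nmul_linr _ A a1)) (linZ' (@nmul_linl _ A a2)) Hx.
- by rewrite Hx Hy.
Qed.

Definition comm3 (x y : pairs A) := forall a, y.2 (x.1 a) = x.1 (y.2 a).

Lemma comm_ind_x y : linear y.2 -> forall x, inB x ->
  (forall (B : nalg k) l r (b : B), is_action l r -> comm3 (l b, fun a => r a b) y) ->
  comm3 x y.
Proof.
move=> Ly x Hx0 G; elim: x / Hx0 => [B l r b H | x y' Lx Hx _ Hy | c x Lx Hx | x y' _ Hx _ Hy] a /=.
- exact: G H a.
- by rewrite !addrfctE (linD' Ly) Hx ?Hy.
- by rewrite !scalrfctE (linZ' Ly) Hx.
- by rewrite Hx // Hy.
Qed.

Lemma comm_ind_y x : linear x.1 -> forall y, inB y ->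
  (forall (B : nalg k) l r (b : B), is_action l r -> comm3 x (l b, fun a => r a b)) ->
  comm3 x y.
Proof.
move=> Lx y Hy0 G; elim: y / Hy0 => [B l r b H | y y' _ Hx _ Hy | c y _ Hx | y y' _ Hx _ Hy] a /=.
- exact: G H a.
- by rewrite !addrfctE (linD' Lx) Hx ?Hy.
- by rewrite !scalrfctE (linZ' Lx) Hx.
- by rewrite Hx // Hy.
Qed.

Lemma cond2_comm : Condition2 A -> forall x y, inB x -> inB y -> comm3 x y.
Proof.
move=> C2 x y Hx Hy.
apply: (comm_ind_y (proj1 (inB_lin Hx)) Hy) => B l r b HB.
apply: (comm_ind_x _ Hx) => [|C l' r' c HC a /=].
  exact: act_r_linA HB b.
by rewrite (C2 _ _ _ _ _ _ HB HC a b c).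
Qed.

Lemma BA_action_gen : (forall (x y : BA A) a, BA_r (BA_l x a) y = BA_l x (BA_r a y)) ->
  is_action (@BA_l k A) (@BA_r k A).
Proof.
move=> H3; split.
- by move=> x; exact: (proj1 (inB_lin (bval_inB x))).
- by move=> a c u v.
- by move=> x; exact: (proj2 (inB_lin (bval_inB x))).
- by move=> a c u v.
- by [].
- by [].
- by move=> x a y; apply: H3.
- by move=> x a1 a2; exact: inB_ax4 (bval_inB x) a1 a2.
- by move=> a1 a2 x; exact: inB_ax5 (bval_inB x) a1 a2.
- by move=> a1 x a2; exact: inB_ax6 (bval_inB x) a1 a2.
Qed.

Lemma part1 : is_action (@BA_l k A) (@BA_r k A) <-> Condition2 A.
Proof.
split.
- move=> H B C lB rB lC rC HB HC a b c.
  pose x : BA A := BCar (introT (asboolP _) (inB_gen c HC)).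
  pose y : BA A := BCar (introT (asboolP _) (inB_gen b HB)).
  exact: esym (act_ax3 H x a y).
- move=> C2; apply: BA_action_gen => x y a.
  exact: cond2_comm C2 _ _ (bval_inB x) (bval_inB y) a.
Qed.

End Aux.

Theorem proposition4p6 (k : comPzRingType) (A : nalg k) :
  (is_action (@BA_l k A) (@BA_r k A) <-> Condition2 A) /\
  (Condition2 A -> is_actor (@BA_d k A) (@BA_l k A) (@BA_r k A)).
Proof.
split; first exact: part1.
move=> C2; have Hact := proj2 (part1 A) C2.
split; first split.
- split.
  + move=> c u v; apply: bval_inj => /=; congr pair; apply/funext => a /=.
      by rewrite (@nmul_linl _ A a).
    by rewrite (@nmul_linr _ A a).
  + move=> u v; apply: bval_inj => /=; rewrite /pmul /=; congr pair;
      apply/funext => a /=; by rewrite nmulA.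
- exact: Hact.
- move=> g a; apply: bval_inj => /=; rewrite /pmul /=; congr pair;
    apply/funext => u /=.
    by rewrite (inB_ax4 (bval_inB g)).
  by rewrite (inB_ax6 (bval_inB g)).
- move=> a g; apply: bval_inj => /=; rewrite /pmul /=; congr pair;
    apply/funext => u /=.
    by rewrite (inB_ax6 (bval_inB g)).
  by rewrite (inB_ax5 (bval_inB g)).
- by [].
- by [].
- move=> C lc rc HC.
  exists (fun c => BCar (introT (asboolP _) (inB_gen c HC))); split; [split|..].
  + split.
    * move=> c u v; apply: bval_inj => /=; congr pair; apply/funext => a /=.
        by rewrite (act_l_linB HC a).
      by rewrite (act_r_linB HC a).
    * move=> u v; apply: bval_inj => /=; rewrite /pmul /=; congr pair;
        apply/funext => a /=.
        by rewrite (act_ax1 HC).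
      by rewrite (act_ax2 HC).
  + by [].
  + by [].
  + move=> phi [_ H1 H2]; apply/funext => c; apply: bval_inj => /=.
    case E: (bval (phi c)) => [p1 p2]; congr pair; apply/funext => a.
      by have := H1 c a; rewrite /BA_l E.
    by have := H2 c a; rewrite /BA_r E.
Qed.
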